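(* Let $(X,d,G)$ be a $G$-system, $\{F_n\}$ a Følner sequence of $G$, and $Z$ a nonempty subset of $X$. Then: (1) if $h_{top}(G,Z,\{F_n\})=\infty$ and $\overline{\mathrm{mdim}}_M(G,Z,\{F_n\},d)<\infty$, then $\overline{D}_M(G,Z,\{F_n\},d)\le1\le D(G,Z,\{F_n\})$; (2) if $0<\overline{\mathrm{mdim}}_M(G,Z,\{F_n\},d)<\infty$, then $\overline{D}_M(G,Z,\{F_n\},d)=1=D(G,Z,\{F_n\})$.
   Context: $G$ is a countably infinite discrete amenable group; $(X,d,G)$ a compact metric space with continuous $G$-action by homeomorphisms; $\{F_n\}$ nonempty finite subsets of $G$ with $|gF_n\triangle F_n|/|F_n|\to0$ for all $g$. $d_F(x,y)=\max_{g\in F}d(gx,gy)$; $s(Z,d_F,\epsilon)$ maximal cardinality of a subset of $Z$ with pairwise $d_F$-distances $>\epsilon$; $h_{top}(G,Z,d,\{F_n\},\epsilon)=\limsup_n\frac1{|F_n|}\log s(Z,d_{F_n},\epsilon)$ and $h_{top}(G,Z,\{F_n\})=\lim_{\epsilon\to0}h_{top}(G,Z,d,\{F_n\},\epsilon)$. For $s>0$: $h_{top}(G,Z,s,\{F_n\})=\lim_{\epsilon\to0}\limsup_n\frac{\log s(Z,d_{F_n},\epsilon)}{|F_n|^s}$ and the entropy dimension is $D(G,Z,\{F_n\})=\inf\{s>0:h_{top}(G,Z,s,\{F_n\})=0\}$; $\overline{\mathrm{mdim}}_M(G,Z,\{F_n\},s,d)=\limsup_{\epsilon\to0}h_{top}(G,Z,d,\{F_n\},\epsilon)/(\log\frac1\epsilon)^s$,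 $\overline{\mathrm{mdim}}_M(G,Z,\{F_n\},d)$ is the case $s=1$, and $\overline{D}_M(G,Z,\{F_n\},d)=\inf\{s>0:\overline{\mathrm{mdim}}_M(G,Z,\{F_n\},s,d)=0\}$. *)

(* Defs.v *)
From HB Require Import structures.
From mathcomp Require Import all_boot all_order all_algebra finmap.
From mathcomp Require Import all_classical all_reals all_analysis.

Set Implicit Arguments.
Unset Strict Implicit.
Unset Printing Implicit Defensive.

Import Order.TTheory GRing.Theory Num.Theory.
Import numFieldNormedType.Exports.

Local Open Scope classical_set_scope.
Local Open Scope ring_scope.

Section GSystem.
Variables (R : realType) (G : groupType) (X : Type).

Definition is_metric (d : X -> X -> R) : Prop :=
  [/\ forall x y, d x y = 0 <-> x = y,
      forall x y, d x y = d y x &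
      forall x y z, d x z <= d x y + d y z].

(* (X,d) is compact (sequential compactness, equivalent for metric spaces) *)
Definition metric_compact (d : X -> X -> R) : Prop :=
  forall u : nat -> X, exists phi : nat -> nat, exists x : X,
    (forall n, (phi n < phi n.+1)%N) /\
    (fun n => d (u (phi n)) x) @ \oo --> (0 : R).

(* act is a left action of G on X by continuous maps (hence homeomorphisms) *)
Definition is_continuous_action (d : X -> X -> R) (act : G -> X -> X) : Prop :=
  [/\ forall x, act 1%g x = x,
      forall g h x, act (g * h)%g x = act g (act h x) &
      forall g x (e : R), 0 < e -> exists2 delta : R, 0 < delta &
        forall y, d x y < delta -> d (act g x) (act g y) < e].

Definition countably_infinite : Prop :=
  exists e : nat -> G, bijective e.

Definition ltrans (g : G) (F : {fset G}) : {fset G} := [fset (g * h)%g | h in F]%fset.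
Definition fsymdiff (A B : {fset G}) : {fset G} := ((A `\` B) `|` (B `\` A))%fset.

Definition Folner (F : nat -> {fset G}) : Prop :=
  (forall n, F n != fset0) /\
  forall g : G,
    (fun n => (#|` fsymdiff (ltrans g (F n)) (F n)|%:R / #|` F n|%:R : R))
      @ \oo --> (0 : R).

Variables (d : X -> X -> R) (act : G -> X -> X).

Definition dF (F : {fset G}) (x y : X) : R :=
  \big[Num.max/0]_(g <- F) d (act g x) (act g y).

Definition sep_num (Z : set X) (F : {fset G}) (eps : R) : \bar R :=
  ereal_sup [set (n%:R)%:E | n in [set n : nat | exists f : nat -> X,
     (forall i, (i < n)%N -> Z (f i)) /\
     (forall i j, (i < n)%N -> (j < n)%N -> i <> j -> eps < dF F (f i) (f j))]].

Definition elog (x : \bar R) : \bar R :=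
  match x with
  | r%:E => (ln r)%:E
  | +oo%E => +oo%E
  | -oo%E => -oo%E
  end.

Local Open Scope ereal_scope.

Definition htop_eps (Z : set X) (F : nat -> {fset G}) (eps : R) : \bar R :=
  limn_esup (fun n => elog (sep_num Z (F n) eps) * ((#|` F n|%:R)^-1)%:E).

Definition htop (Z : set X) (F : nat -> {fset G}) : \bar R :=
  lim (htop_eps Z F @ 0^'+).

Definition htop_s (Z : set X) (s : R) (F : nat -> {fset G}) : \bar R :=
  lim ((fun eps => limn_esup (fun n =>
          elog (sep_num Z (F n) eps) * ((#|` F n|%:R `^ s)^-1)%:E)) @ 0^'+).

Definition entropy_dim (Z : set X) (F : nat -> {fset G}) : \bar R :=
  ereal_inf [set s%:E | s in [set s : R | (0 < s)%R /\ htop_s Z s F = 0]].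

Definition mdimM_s (Z : set X) (F : nat -> {fset G}) (s : R) : \bar R :=
  limf_esup (fun eps : R => htop_eps Z F eps * (((ln eps^-1) `^ s)^-1)%:E) 0^'+.

Definition mdimM (Z : set X) (F : nat -> {fset G}) : \bar R := mdimM_s Z F 1.

Definition DM (Z : set X) (F : nat -> {fset G}) : \bar R :=
  ereal_inf [set s%:E | s in [set s : R | (0 < s)%R /\ mdimM_s Z F s = 0]].

End GSystem.

(* Main.v *)
Set Warnings "-all".
Require Import Defs.
From HB Require Import structures.
From mathcomp Require Import all_boot all_order all_algebra finmap.
From mathcomp Require Import all_classical all_reals all_analysis.
From mathcomp Require Import zify.
Import Order.TTheory GRing.Theory Num.Theory.
Local Open Scope classical_set_scope.
Local Open Scope ereal_scope.

Section Folner.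
Variables (R : realType) (G : groupType) (F : nat -> {fset G}).
Hypothesis hF : Folner R F.

Lemma near_all (P : nat -> nat -> Prop) N :
  (forall i, (i < N)%N -> \forall n \near \oo, P i n) ->
  \forall n \near \oo, forall i, (i < N)%N -> P i n.
Proof.
elim: N => [|N IH] H; first by apply: nearW => n i.
have H1 := IH (fun i hi => H i (ltnW hi)).
have H2 := H N (ltnSn N).
apply: (filterS2 _ _ H1 H2) => n A B i; rewrite ltnS leq_eqVlt => /orP[/eqP->//|].
exact: A.
Qed.

Lemma folner_meet (g : G) : \forall n \near \oo,
  exists2 h, h \in F n & (g * h)%g \in F n.
Proof.
case: hF => hne hc.
near=> n.
have Hn : (#|` fsymdiff (ltrans g (F n)) (F n)|%:R / #|` F n|%:R < 1 :> R)%R.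
  by near: n; exact: (@cvgr_lt R nat \oo _ _ 0%R (hc g) 1%R ltr01).
case: (pselect (exists2 h, h \in F n & (g * h)%g \in F n)) => // Hno; exfalso.
have m0 : (0 < #|` F n|)%N by rewrite cardfs_gt0 hne.
have : (#|` fsymdiff (ltrans g (F n)) (F n)| < #|` F n|)%N.
  have m0' : (0 < #|` F n|%:R :> R)%R by rewrite ltr0n.
  by rewrite -(ltr_nat R) -[X in (_ < X)%R]mul1r -ltr_pdivrMr.
apply/negP; rewrite -leqNgt.
apply: (@leq_trans (size [seq (g * h)%g | h <- F n])).
  by rewrite size_map.
apply: uniq_leq_size; first by rewrite map_inj_uniq ?fset_uniq //; exact: mulgI.
move=> y /mapP [h hin ->].
rewrite /fsymdiff in_fsetU !in_fsetD /ltrans.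
have -> : (g * h)%g \notin F n by apply/negP => H; apply: Hno; exists h.
by rewrite in_imfset.
Unshelve. all: by end_near.
Qed.

Lemma folner_grow (e : nat -> G) : injective e ->
  forall K, \forall n \near \oo, (K <= #|` F n|)%N.
Proof.
move=> einj K.
have := @near_all (fun i n => exists2 h, h \in F n & (e i * h)%g \in F n)
  (K * K)%N (fun i _ => folner_meet (e i)).
apply: filterS => n Hn.
have : (K * K <= #|` F n| * #|` F n|)%N.
  rewrite -(size_iota 0 (K * K)) -(size_map e) -(size_allpairs (fun a b : G => (a * b^-1)%g)).
  apply: uniq_leq_size; first by rewrite map_inj_uniq ?iota_uniq.
  move=> y /mapP [i]; rewrite mem_iota add0n => /andP[_ hi] ->.
  have [h hin hin2] := Hn i hi.
  have -> : e i = ((e i * h) * h^-1)%g by rewrite mulgK.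
  exact: (allpairs_f (fun a b => (a * b^-1)%g)).
by nia.
Qed.
End Folner.
Section LS.
Context {R : realType} {T : choiceType} {Y : filteredType T}.
Implicit Types (f g : Y -> \bar R) (F : set_system Y).

Lemma les_le f F (a : \bar R) : Filter F ->
  (\forall x \near F, f x <= a) -> limf_esup f F <= a.
Proof.
move=> FF H; rewrite limf_esupE.
apply: (@le_trans _ _ (ereal_sup (f @` [set x | f x <= a]))).
  by apply: ereal_inf_lbound; exists [set x | f x <= a].
by apply: ge_ereal_sup => y [x hx <-].
Qed.

Lemma les_lt f F (a : \bar R) : Filter F ->
  limf_esup f F < a -> \forall x \near F, f x < a.
Proof.
move=> FF; rewrite limf_esupE => /ereal_inf_lt [y [V FV <-]] hV.
apply: filterS FV => x Vx; apply: le_lt_trans hV.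
by apply: ereal_sup_ubound; exists x.
Qed.

Lemma les_gt f F (a : \bar R) (P : set Y) :
  a < limf_esup f F -> (\forall x \near F, P x) -> exists x, P x /\ a < f x.
Proof.
rewrite limf_esupE => ha FP.
have : a < ereal_sup (f @` P).
  by apply: lt_le_trans ha _; apply: ereal_inf_lbound; exists P.
by move=> /ereal_sup_gt [y [x Px <-]] h; exists x.
Qed.

Lemma les_mono f g F : Filter F ->
  (\forall x \near F, f x <= g x) -> limf_esup f F <= limf_esup g F.
Proof.
move=> FF H; rewrite [X in _ <= X]limf_esupE.
apply: le_ereal_inf_tmp => y [V FV <-].
apply: les_le.
apply: filterS2 H FV => x h1 h2; apply: le_trans h1 _.
by apply: ereal_sup_ubound; exists x.
Qed.

End LS.
Section Real.
Context {R : realType}.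
Local Open Scope ring_scope.

Lemma pow_big (c δ s : R) : (0 < δ)%R -> (1 < s)%R ->
  exists A : R, (0 < A)%R /\ forall m, (A <= m)%R -> (c * m <= δ * m `^ s)%R.
Proof.
move=> d0 s1.
pose k := Num.max (c / δ) 1.
have k0 : (0 < k)%R by rewrite lt_max ltr01 orbT.
have s0 : (0 < s - 1)%R by rewrite subr_gt0.
pose A := Num.max 1 (k `^ (s - 1)^-1).
have A0 : (0 < A)%R by rewrite lt_max ltr01.
exists A; split => // m Am.
have m0 : (0 < m)%R by apply: lt_le_trans Am.
have -> : (m `^ s = m * m `^ (s - 1))%R.
  have := @powRD R m 1 (s - 1).
  rewrite [(1 + _)%R]addrC subrK powRr1 ?(ltW m0) //; apply.
  by apply/implyP => _; rewrite gt_eqF.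

have km : (k <= m `^ (s - 1))%R.
  have -> : k = ((k `^ (s - 1)^-1) `^ (s - 1))%R.
    by rewrite -powRrM mulVf ?gt_eqF // powRr1 // ltW.
  apply: ge0_ler_powR.
  - exact: ltW.
  - by rewrite nnegrE powR_ge0.
  - by rewrite nnegrE ltW.
  - by apply: le_trans Am; rewrite /A le_max lexx orbT.
have ck : (c <= δ * k)%R.
  by rewrite -ler_pdivrMl // mulrC le_max lexx.
apply: (@le_trans _ _ (δ * k * m)%R).
  by rewrite ler_wpM2r // ltW.
by rewrite -mulrA ler_pM2l // [(k * m)%R]mulrC ler_pM2l.
Qed.

Lemma core (x : \bar R) (m c δ s : R) : (0 <= x)%E -> (0 < m)%R -> (0 < δ)%R ->
  (x * (m^-1)%:E < c%:E)%E -> (c * m <= δ * m `^ s)%R ->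
  (x * ((m `^ s)^-1)%:E <= δ%:E)%E.
Proof.
move=> x0 m0 d0; case: x x0 => [h| |] //= h0.
- rewrite !lte_fin lee_fin => hc hm.
  have ms0 : (0 < m `^ s)%R by rewrite powR_gt0.
  rewrite ler_pdivrMr //.
  apply: le_trans hm; rewrite mulrC -ler_pdivrMl // mulrC.
  by apply: ltW.
- by rewrite gt0_mulye ?lte_fin ?invr_gt0.
Qed.

Lemma mono_pow (x : \bar R) (m s : R) : (0 <= x)%E -> (1 <= m)%R -> (s <= 1)%R ->
  (x * (m^-1)%:E <= x * ((m `^ s)^-1)%:E)%E.
Proof.
move=> x0 m1 s1; apply: lee_wpmul2l => //; rewrite lee_fin.
have m0 : (0 < m)%R by apply: lt_le_trans m1.
rewrite lef_pV2 ?posrE ?powR_gt0 //.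
by rewrite -{2}(powRr1 (ltW m0)) ler_powR.
Qed.

Lemma ln_big (A : R) : \forall e \near 0%R^'+, (0 < e)%R /\ (A < ln e^-1)%R.
Proof.
near=> e.
have e0 : (0 < e)%R by near: e; exact: nbhs_right_gt.
have e1 : (e < expR (- A))%R by near: e; apply: nbhs_right_lt; exact: expR_gt0.
split => //.
rewrite -[X in (X < _)%R](expRK A) ltr_ln ?posrE ?invr_gt0 ?expR_gt0 //.
by rewrite -[X in (X < _)%R]invrK ltf_pV2 ?posrE ?invr_gt0 ?expR_gt0 // -expRN.
Unshelve. all: by end_near.
Qed.

End Real.

Section Main.
Variables (R : realType) (G : groupType) (X : Type) (d : X -> X -> R)
  (act : G -> X -> X) (F : nat -> {fset G}) (Z : set X).
Hypotheses (hF : Folner R F) (hZ : Z !=set0) (e : nat -> G) (einj : injective e).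

Local Notation H := (htop_eps d act Z F).
Local Notation sep := (sep_num d act Z).

Definition gs (s eps : R) := limn_esup (fun n =>
  elog (sep (F n) eps) * ((#|` F n|%:R `^ s)^-1)%:E).

Lemma sep_ge1 K eps : 1 <= sep K eps.
Proof.
case: hZ => z Zz.
apply: (@le_trans _ _ ((1%:R : R)%:E)) => //.
apply: ereal_sup_ubound; exists 1%N => //.
exists (fun=> z); split => // i j; rewrite !ltnS !leqn0 => /eqP-> /eqP->. by [].
Qed.

Lemma elog_ge0 (x : \bar R) : 1 <= x -> 0 <= elog x.
Proof. by case: x => [r||] //=; rewrite !lee_fin => h; rewrite ln_ge0. Qed.

Lemma elog_le (x y : \bar R) : 1 <= x -> x <= y -> elog x <= elog y.
Proof.
case: x => [r||] //; case: y => [r'||] //=; rewrite ?leey //.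
rewrite !lee_fin => h1 h2.
have r0 : (0 < r)%R by apply: lt_le_trans h1.
have r'0 : (0 < r')%R by apply: lt_le_trans h2.
by rewrite ler_ln ?posrE.
Qed.

Lemma sep_mono K e1 e2 : (e1 <= e2)%R -> sep K e2 <= sep K e1.
Proof.
move=> e12; apply: ereal_sup_le => y [n [f [h1 h2]] <-]; exists n => //.
exists f; split => // i j hi hj hij; apply: le_lt_trans e12 _; exact: h2.
Qed.

Lemma cardF_ge1 n : (1 <= #|` F n|%:R :> R)%R.
Proof. by rewrite ler1n cardfs_gt0; case: hF. Qed.

Lemma cardF_gt0 n : (0 < #|` F n|%:R :> R)%R.
Proof. exact: lt_le_trans ltr01 (cardF_ge1 n). Qed.

Lemma H_ge0 eps : 0 <= H eps.
Proof.
apply: limf_esup_ge0; first exact: filter_not_empty.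
move=> n; apply: mule_ge0; first exact/elog_ge0/sep_ge1.
by rewrite lee_fin invr_ge0 ler0n.
Qed.

Lemma H_mono e1 e2 : (e1 <= e2)%R -> H e2 <= H e1.
Proof.
move=> e12; apply: les_mono; apply: nearW => n.
apply: lee_wpmul2r; first by rewrite lee_fin invr_ge0 ler0n.
by apply: elog_le; [exact: sep_ge1 | exact: sep_mono].
Qed.

Lemma gs_ge_H s eps : (s <= 1)%R -> H eps <= gs s eps.
Proof.
move=> s1; apply: les_mono; apply: nearW => n.
exact: mono_pow (elog_ge0 _ (sep_ge1 _ _)) (cardF_ge1 n) s1.
Qed.

Lemma fin_bound (x : \bar R) : x < +oo -> exists c : R, x < c%:E.
Proof.
case: x => [r| |] // _; first by exists (r + 1)%R; rewrite lte_fin ltrDl.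
by exists 0%R; rewrite ltNyr.
Qed.

Lemma gs_zero s eps : (1 < s)%R -> H eps < +oo -> gs s eps = 0.
Proof.
move=> s1 Hfin; apply/eqP; rewrite eq_le; apply/andP; split; last first.
  apply: limf_esup_ge0; first exact: filter_not_empty.
  move=> n; apply: mule_ge0; first exact/elog_ge0/sep_ge1.
  by rewrite lee_fin invr_ge0 powR_ge0.
apply/lee_addgt0Pr => δ δ0; rewrite add0e.
have [c hc] := fin_bound _ Hfin.
have [A [A0 hA]] := @pow_big R c δ s δ0 s1.
apply: les_le; near=> n.
have h1 : elog (sep (F n) eps) * ((#|` F n|%:R)^-1)%:E < c%:E.
  by near: n; exact: (les_lt _ _ _ _ hc).
have h2 : (A <= #|` F n|%:R)%R.
  near: n; have := @folner_grow R G F hF e einj (Num.trunc A).+1.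
  apply: filterS => n hn; apply: ltW; apply: lt_le_trans (truncnS_gt A) _.
  by rewrite ler_nat.
exact: core (elog_ge0 _ (sep_ge1 _ _)) (cardF_gt0 n) δ0 h1 (hA _ h2).
Unshelve. all: by end_near.
Qed.

Lemma M1_fin : mdimM d act Z F < +oo -> exists c : R, (0 < c)%R /\
  \forall eps \near 0%R^'+, H eps * ((ln eps^-1)^-1)%:E < c%:E.
Proof.
move=> hM; have [c hc] := fin_bound _ hM.
exists (Num.max c 1%R); split; first by rewrite lt_max ltr01 orbT.
near=> eps.
have h1 : H eps * (((ln eps^-1) `^ 1)^-1)%:E < c%:E by near: eps; exact: (les_lt _ _ _ _ hc).
have [e0 hL] : (0 < eps)%R /\ (0 < ln eps^-1)%R by near: eps; exact: ln_big.
rewrite powRr1 ?ltW // in h1; apply: lt_le_trans h1 _.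
by rewrite lee_fin le_max lexx.
Unshelve. all: by end_near.
Qed.

Lemma Ms_ge0 s : 0 <= mdimM_s d act Z F s.
Proof.
apply: limf_esup_ge0; first exact: filter_not_empty.
by move=> eps; apply: mule_ge0; [exact: H_ge0|rewrite lee_fin invr_ge0 powR_ge0].
Qed.

Lemma Ms_zero s : (1 < s)%R -> mdimM d act Z F < +oo -> mdimM_s d act Z F s = 0.
Proof.
move=> s1 hM; apply/eqP; rewrite eq_le Ms_ge0 andbT.
apply/lee_addgt0Pr => δ δ0; rewrite add0e.
have [c [c0 hc]] := M1_fin hM.
have [A [A0 hA]] := @pow_big R c δ s δ0 s1.
apply: les_le; near=> eps.
have h1 : H eps * ((ln eps^-1)^-1)%:E < c%:E by near: eps; exact: hc.
have [e0 hL] : (0 < eps)%R /\ (A < ln eps^-1)%R by near: eps; exact: ln_big.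
exact: core (H_ge0 _) (lt_trans A0 hL) δ0 h1 (hA _ (ltW hL)).
Unshelve. all: by end_near.
Qed.

Lemma M1_le_Ms s : (s <= 1)%R -> mdimM d act Z F <= mdimM_s d act Z F s.
Proof.
move=> s1; apply: les_mono; near=> eps.
have [e0 hL] : (0 < eps)%R /\ (1 < ln eps^-1)%R by near: eps; exact: ln_big.
rewrite powRr1; last exact: ltW (lt_trans ltr01 hL).
exact: mono_pow (H_ge0 _) (ltW hL) s1.
Unshelve. all: by end_near.
Qed.

Lemma M1_pos_H : 0 < mdimM d act Z F -> H eps @[eps --> 0%R^'+] --> +oo.
Proof.
move=> hp.
have [m [m0 hm]] : exists m : R, (0 < m)%R /\ m%:E < mdimM d act Z F.
  move: hp; case: (mdimM d act Z F) => [r||] //.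
    rewrite lte_fin => r0; exists (r / 2)%R; split; first by rewrite divr_gt0.
    by rewrite lte_fin ltr_pdivrMr // ltr_pMr // ltr1n.
  by move=> _; exists 1%R; rewrite ltry ltr01.
apply/cvgeyPge => A.
pose B := Num.max A 0%R.
have B0 : (0 <= B)%R by rewrite le_max lexx orbT.
have [eps1 [[e10 hL1] hm1]] := les_gt _ _ _ _ hm (ln_big (B / m)%R).
have L0 : (0 < ln eps1^-1)%R by apply: le_lt_trans hL1; rewrite divr_ge0 // ltW.
rewrite powRr1 ?ltW // in hm1.
have HB : A%:E <= H eps1.
  have := H_ge0 eps1; move: hm1; case: (H eps1) => [h| |]; last 2 first.
  - by move=> _ _; rewrite leey.
  - by move=> _; rewrite leeNy_eq.
  rewrite -EFinM lte_fin lee_fin => hh _.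
  rewrite ltr_pdivlMr // in hh.
  apply: (@le_trans _ _ B); first by rewrite le_max lexx.
  apply: ltW; apply: lt_trans hh.
  by rewrite mulrC -ltr_pdivrMr.
near=> eps.
have [e0 e1] : (0 < eps)%R /\ (eps < eps1)%R.
  split; near: eps; [exact: nbhs_right_gt| exact: nbhs_right_lt].
exact: le_trans HB (H_mono _ _ (ltW e1)).
Unshelve. all: by end_near.
Qed.

Lemma htop_cvg : htop d act Z F = +oo -> H eps @[eps --> 0%R^'+] --> +oo.
Proof.
move=> h.
have E : htop d act Z F = xget (0 : \bar R) (fun l => H eps @[eps --> 0%R^'+] --> l) := erefl.
rewrite E in h.
case: (pselect (exists l : \bar R, H eps @[eps --> 0%R^'+] --> l)) => [ex|nex].
  by have := xgetPex 0 ex; rewrite h.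
by rewrite xgetPN in h => // l hl; apply: nex; exists l.
Qed.

Lemma htop_s_infty s : (s <= 1)%R -> H eps @[eps --> 0%R^'+] --> +oo ->
  htop_s d act Z s F = +oo.
Proof.
move=> s1 hH; rewrite /htop_s; apply: cvg_lim; first exact: ereal_hausdorff.
apply/cvgeyPge => A; near=> eps.
apply: le_trans (gs_ge_H s eps s1); near: eps.
exact: ((cvgeyPge _).1 hH A).
Unshelve. all: by end_near.
Qed.

Lemma htop_s_zero s : (1 < s)%R -> mdimM d act Z F < +oo -> htop_s d act Z s F = 0.
Proof.
move=> s1 hM; rewrite /htop_s; apply: cvg_lim; first exact: ereal_hausdorff.
apply: cvg_near_cst.
have [c [c0 hc]] := M1_fin hM.
near=> eps.
have h1 : H eps * ((ln eps^-1)^-1)%:E < c%:E by near: eps; exact: hc.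
have [e0 hL] : (0 < eps)%R /\ (0 < ln eps^-1)%R by near: eps; exact: ln_big.
apply: (gs_zero s eps s1).
move: h1; case: (H eps) => [r| |] //; first by rewrite ltry.
by rewrite gt0_mulye // lte_fin invr_gt0.
Unshelve. all: by end_near.
Qed.

End Main.

Lemma DM_le1 (R : realType) (S : R -> Prop) :
  (forall s, (1 < s)%R -> S s) ->
  ereal_inf [set s%:E | s in [set s : R | (0 < s)%R /\ S s]] <= 1.
Proof.
move=> hS; apply/lee_addgt0Pr => δ δ0.
apply: ereal_inf_lbound; exists (1 + δ)%R; last by [].
split; first by rewrite addr_gt0.
by apply: hS; rewrite ltrDl.
Qed.

Lemma ge1_inf (R : realType) (S : R -> Prop) :
  (forall s, (0 < s)%R -> (s < 1)%R -> ~ S s) ->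
  1 <= ereal_inf [set s%:E | s in [set s : R | (0 < s)%R /\ S s]].
Proof.
move=> hS; apply: le_ereal_inf_tmp => y [s [s0 hs] <-].
rewrite lee_fin leNgt; apply/negP => hs1; exact: hS s s0 hs1 hs.
Qed.

Theorem mainTheorem12 (R : realType) (G : groupType) (X : Type)
  (d : X -> X -> R) (act : G -> X -> X) (F : nat -> {fset G}) (Z : set X) :
  countably_infinite G ->
  is_metric d -> metric_compact d -> is_continuous_action d act ->
  Folner R F -> Z !=set0 ->
  ((htop d act Z F = +oo /\ mdimM d act Z F < +oo) ->
     DM d act Z F <= 1 /\ 1 <= entropy_dim d act Z F) /\
  ((0 < mdimM d act Z F /\ mdimM d act Z F < +oo) ->
     DM d act Z F = 1 /\ entropy_dim d act Z F = 1).
Proof.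
move=> [e ebij] _ _ _ hF hZ.
have einj := bij_inj ebij.
split.
- move=> [hh hM]; split.
  + by apply: DM_le1 => s s1; apply: Ms_zero.
  + apply: ge1_inf => s s0 s1 hs.
    have := htop_s_infty _ _ _ _ _ _ _ hF hZ _ (ltW s1) (htop_cvg _ _ _ _ _ _ _ hh).
    by rewrite hs.
- move=> [hp hM]; split.
  + apply/le_anti/andP; split; first by apply: DM_le1 => s s1; apply: Ms_zero.
    apply: ge1_inf => s s0 s1 hs.
    have := M1_le_Ms _ _ _ d act F Z hZ _ (ltW s1); rewrite hs => /(lt_le_trans hp).
    by rewrite ltxx.
  + apply/le_anti/andP; split.
      by apply: DM_le1 => s s1; apply: (htop_s_zero _ _ _ _ _ _ _ hF hZ e einj).
    apply: ge1_inf => s s0 s1 hs.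
    have := htop_s_infty _ _ _ _ _ _ _ hF hZ _ (ltW s1) (M1_pos_H _ _ _ _ _ _ _ hZ hp).
    by rewrite hs.
Qed.
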